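(* For a semigroup $X$ the following conditions are equivalent: (1) $N_2(X)$ is a commutative Clifford semigroup; (2) $N_2(X)$ is an inverse semigroup; (3) the idempotents of the semigroup $N_2(X)$ commute, and $N_2(X)$ is sub-Clifford or regular; (4) $X$ is isomorphic to $C_2$ or to $L_n$ for some $n\in\omega$.
   Context: An upfamily on a set $X$ is a family $\mathcal F$ of nonempty subsets of $X$ such that $F\in\mathcal F$ and $F\subset E\subset X$ imply $E\in\mathcal F$. $\upsilon(X)$ is the set of all upfamilies on $X$; $N_2(X)$ is the set of linked upfamilies, i.e. those with $A\cap B\ne\emptyset$ for all members $A,B$. Each $x\in X$ is identified with $\langle x\rangle=\{A\subset X: x\in A\}$. For a family $\mathcal C$ of nonempty subsets, $\langle\mathcal C\rangle=\{A\subset X:\exists C\in\mathcal C,\ C\subset A\}$. For a semigroup $(X,* )$ the operation is extended to $\upsilon(X)$ by $\mathcal A*\mathcal B=\big\langle \bigcup_{a\in A} a*B_a : A\in\mathcal A,\ \{B_a\}_{a\in A}\subset\mathcal B\big\rangle$; $N_2(X)$ is a subsemigroup. A semigroup $S$ is inverse if each $x$ has a unique $x^{-1}$ with $xx^{-1}x=x$, $x^{-1}xx^{-1}=x^{-1}$; regular if $x\in xSx$ for all $x$; Clifford if it is a union of groups; sub-Clifford if it is a union of cancellative subsemigroups. $C_n=\{z\in\mathbb C: z^n=1\}$; $L_n=\{0,\dots,n-1\}$ with the operation $\min$ ($L_0=\emptyset$). *)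

(* Defs.v *)
From HB Require Import structures.
From mathcomp Require Import all_boot all_order all_algebra all_field.
Set Implicit Arguments. Unset Strict Implicit. Unset Printing Implicit Defensive.
Import GRing.Theory.

Definition upfamily (X : Type) (F : (X -> Prop) -> Prop) : Prop :=
  (forall A, F A -> exists x, A x) /\
  (forall A B : X -> Prop, F A -> (forall x, A x -> B x) -> F B).

Definition N2 (X : Type) (F : (X -> Prop) -> Prop) : Prop :=
  upfamily F /\ (forall A B, F A -> F B -> exists x, A x /\ B x).

Definition up_mul (X : Type) (op : X -> X -> X)
  (FA FB : (X -> Prop) -> Prop) : (X -> Prop) -> Prop :=
  fun C => exists A : X -> Prop, FA A /\
    exists Bf : X -> (X -> Prop), (forall a, A a -> FB (Bf a)) /\
      (forall z, (exists a, A a /\ exists b, Bf a b /\ z = op a b) -> C z).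

Definition sg_commutative (U : Type) (P : U -> Prop) (mul : U -> U -> U) : Prop :=
  forall x y, P x -> P y -> mul x y = mul y x.

Definition is_subgroup (U : Type) (P : U -> Prop) (mul : U -> U -> U)
  (G : U -> Prop) : Prop :=
  (forall g, G g -> P g) /\
  (forall a b, G a -> G b -> G (mul a b)) /\
  exists e, G e /\ (forall a, G a -> mul e a = a /\ mul a e = a) /\
    (forall a, G a -> exists b, G b /\ mul a b = e /\ mul b a = e).

Definition sg_clifford (U : Type) (P : U -> Prop) (mul : U -> U -> U) : Prop :=
  forall x, P x -> exists G, is_subgroup P mul G /\ G x.

Definition is_cancellative_subsemigroup (U : Type) (P : U -> Prop)
  (mul : U -> U -> U) (T : U -> Prop) : Prop :=
  (forall t, T t -> P t) /\
  (forall a b, T a -> T b -> T (mul a b)) /\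
  (forall a b c, T a -> T b -> T c -> mul a b = mul a c -> b = c) /\
  (forall a b c, T a -> T b -> T c -> mul b a = mul c a -> b = c).

Definition sg_subclifford (U : Type) (P : U -> Prop) (mul : U -> U -> U) : Prop :=
  forall x, P x -> exists T, is_cancellative_subsemigroup P mul T /\ T x.

Definition sg_regular (U : Type) (P : U -> Prop) (mul : U -> U -> U) : Prop :=
  forall x, P x -> exists s, P s /\ x = mul (mul x s) x.

Definition inv_pair (U : Type) (mul : U -> U -> U) (x y : U) : Prop :=
  mul (mul x y) x = x /\ mul (mul y x) y = y.

Definition sg_inverse (U : Type) (P : U -> Prop) (mul : U -> U -> U) : Prop :=
  forall x, P x -> exists y, P y /\ inv_pair mul x y /\
    (forall z, P z -> inv_pair mul x z -> z = y).

Definition idempotents_commute (U : Type) (P : U -> Prop) (mul : U -> U -> U) : Prop :=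
  forall e f, P e -> P f -> mul e e = e -> mul f f = f -> mul e f = mul f e.

Definition sg_iso (X : Type) (op : X -> X -> X)
  (U : Type) (P : U -> Prop) (mul : U -> U -> U) : Prop :=
  exists f : X -> U,
    (forall x, P (f x)) /\
    (forall x y, f x = f y -> x = y) /\
    (forall u, P u -> exists x, f x = u) /\
    (forall x y, f (op x y) = mul (f x) (f y)).

Local Open Scope ring_scope.
Definition Cn (n : nat) : algC -> Prop := fun z => z ^+ n = 1.
Definition Cmul : algC -> algC -> algC := fun a b => a * b.
Local Close Scope ring_scope.

(* L_n = {0,...,n-1} with min. *)
Definition Ln (n : nat) : nat -> Prop := fun k => k < n.

(* Main.v *)
Require Import Defs.
From mathcomp Require Import all_boot all_order all_algebra all_field zify.
From Stdlib Require Import Classical FunctionalExtensionality PropExtensionality ClassicalEpsilon.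
From Stdlib Require List.

Section Fw.
End Fw.

Definition M {X : Type} (op : X -> X -> X) (A B : (X -> Prop) -> Prop) : (X -> Prop) -> Prop :=
  fun C => A (fun a => B (fun b => C (op a b))).

Definition upc {X : Type} (F : (X -> Prop) -> Prop) : Prop :=
  forall A B : X -> Prop, F A -> (forall x, A x -> B x) -> F B.

Lemma fam_ext {X : Type} (F G : (X -> Prop) -> Prop) :
  (forall C, F C <-> G C) -> F = G.
Proof. intro H. apply functional_extensionality. intro C. apply propositional_extensionality. apply H. Qed.

Lemma pred_ext {X : Type} (A B : X -> Prop) : (forall x, A x <-> B x) -> A = B.
Proof. intro H. apply functional_extensionality. intro C. apply propositional_extensionality. apply H. Qed.

Lemma up_mul_M {X : Type} (op : X -> X -> X) (A B : (X -> Prop) -> Prop) :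
  upc A -> upc B -> up_mul op A B = M op A B.
Proof.
  intros hA hB. apply fam_ext. intro C. unfold up_mul, M. split.
  - intros [A0 [HA0 [Bf [HB Hc]]]]. apply (hA A0); auto.
    intros a Ha. apply (hB (Bf a)); auto.
    intros b Hb. apply Hc. exists a. split; auto. exists b; auto.
  - intro H. exists (fun a => B (fun b => C (op a b))). split; auto.
    exists (fun a b => C (op a b)). split; auto.
    intros z [a [Ha [b [Hb ->]]]]. exact Hb.
Qed.

Lemma M_assoc {X : Type} (op : X -> X -> X)
  (op_assoc : forall a b c, op (op a b) c = op a (op b c)) A B D :
  M op (M op A B) D = M op A (M op B D).
Proof.
  apply fam_ext. intro C. unfold M.
  assert (E : (fun a => B (fun b => D (fun d => C (op (op a b) d)))) =
              (fun a => B (fun b => D (fun d => C (op a (op b d)))))).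
  { apply functional_extensionality; intro a. f_equal.
    apply functional_extensionality; intro b. f_equal.
    apply functional_extensionality; intro d. rewrite op_assoc. reflexivity. }
  rewrite E. tauto.
Qed.

Lemma N2_upc {X : Type} (F : (X -> Prop) -> Prop) : N2 F -> upc F.
Proof. intros [[_ H] _]. exact H. Qed.

Lemma N2_M {X : Type} (op : X -> X -> X) A B : N2 A -> N2 B -> N2 (M op A B).
Proof.
  intros [[nA uA] lA] [[nB uB] lB]. unfold M. split; [split|].
  - intros C HC. destruct (nA _ HC) as [a Ha]. destruct (nB _ Ha) as [b Hb]. eauto.
  - intros C C' HC HCC'. apply (uA _ _ HC). intros a Ha. apply (uB _ _ Ha). auto.
  - intros C C' HC HC'. destruct (lA _ _ HC HC') as [a [Ha Ha']].
    destruct (lB _ _ Ha Ha') as [b [Hb Hb']]. eauto.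
Qed.

Definition pr {X : Type} (x : X) : (X -> Prop) -> Prop := fun C => C x.
Definition fl {X : Type} (F : X -> Prop) : (X -> Prop) -> Prop := fun C => forall a, F a -> C a.

Lemma N2_pr {X : Type} (x : X) : N2 (pr x).
Proof. unfold pr. split; [split|]; eauto. Qed.

Lemma N2_fl {X : Type} (F : X -> Prop) (x : X) : F x -> N2 (fl F).
Proof. unfold fl. intro Hx. split; [split|]; eauto. Qed.

Lemma pr_inj {X : Type} (x y : X) : pr x = pr y -> x = y.
Proof. intro H. assert (E := equal_f H (fun z => z = x)). unfold pr in E. symmetry. rewrite <- E. reflexivity. Qed.

Lemma M_pr {X : Type} (op : X -> X -> X) x y : M op (pr x) (pr y) = pr (op x y).
Proof. reflexivity. Qed.

Section Abstract.
Variables (U : Type) (P : U -> Prop) (mul : U -> U -> U).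
Hypothesis massoc : forall a b c, mul (mul a b) c = mul a (mul b c).
Hypothesis clos : forall a b, P a -> P b -> P (mul a b).

Lemma inv_unique : idempotents_commute P mul ->
  forall u v w, P u -> P v -> P w -> Defs.inv_pair mul u v -> Defs.inv_pair mul u w -> v = w.
Proof.
  intros IC u v w Pu Pv Pw [Hv1 Hv2] [Hw1 Hw2].
  rewrite massoc in Hv1. rewrite massoc in Hv2. rewrite massoc in Hw1. rewrite massoc in Hw2.
  assert (E1 : mul v u = mul w u).
  { assert (I1 : mul (mul v u) (mul v u) = mul v u) by (rewrite massoc Hv1; reflexivity).
    assert (I2 : mul (mul w u) (mul w u) = mul w u) by (rewrite massoc Hw1; reflexivity).
    pose proof (IC _ _ (clos _ _ Pv Pu) (clos _ _ Pw Pu) I1 I2) as H.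
    rewrite !massoc Hw1 Hv1 in H. exact H. }
  assert (E2 : mul u v = mul u w).
  { assert (I1 : mul (mul u v) (mul u v) = mul u v) by (rewrite massoc Hv2; reflexivity).
    assert (I2 : mul (mul u w) (mul u w) = mul u w) by (rewrite massoc Hw2; reflexivity).
    pose proof (IC _ _ (clos _ _ Pu Pv) (clos _ _ Pu Pw) I1 I2) as H.
    rewrite -!massoc in H. rewrite (massoc u v u) Hv1 (massoc u w u) Hw1 in H.
    symmetry. exact H. }
  rewrite -Hv2 E2 -massoc E1 massoc Hw2. reflexivity.
Qed.

Lemma cube_clifford : (forall x, P x -> mul (mul x x) x = x) -> sg_clifford P mul.
Proof.
  intros Hc x Px. exists (fun z => z = x \/ z = mul x x). split; [|left; reflexivity].
  assert (H1 : mul x (mul x x) = x) by (rewrite -massoc; auto).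
  assert (H2 : mul (mul x x) (mul x x) = mul x x) by (rewrite -massoc Hc; auto).
  split; [|split].
  - intros g [->| ->]; auto.
  - intros a b [->| ->] [->| ->]; rewrite ?H1 ?H2 ?Hc; auto.
  - exists (mul x x). split; [right; reflexivity|]. split.
    + intros a [->| ->]; rewrite ?H1 ?H2 ?Hc; auto.
    + intros a [->| ->].
      * exists x. split; auto.
      * exists (mul x x). split; auto.
Qed.

Lemma comm_clifford_inverse : sg_commutative P mul -> sg_clifford P mul -> sg_inverse P mul.
Proof.
  intros Hcom Hcl x Px. destruct (Hcl x Px) as [G [[GP [Gcl [e [Ge [Hid Hinv]]]]] Gx]].
  destruct (Hinv x Gx) as [y [Gy [Hxy Hyx]]].
  assert (IP : Defs.inv_pair mul x y).
  { split.
    - rewrite Hxy. apply (proj1 (Hid x Gx)).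
    - rewrite Hyx. apply (proj1 (Hid y Gy)). }
  exists y. split; [apply GP; auto|]. split; auto.
  intros z Pz Hz. symmetry.
  assert (IC : idempotents_commute P mul) by (intros e1 f1 Pe Pf _ _; apply Hcom; auto).
  assert (Py : P y) by (apply GP; auto).
  exact (inv_unique IC x y z Px Py Pz IP Hz).
Qed.

Lemma inverse_idem_commute : sg_inverse P mul -> idempotents_commute P mul.
Proof.
  intros Hinv.
  assert (Uq : forall a b c, P a -> P b -> P c -> Defs.inv_pair mul a b -> Defs.inv_pair mul a c -> b = c).
  { intros a b c Pa Pb Pc Hb Hc. destruct (Hinv a Pa) as [y [Py [_ Hu]]].
    rewrite (Hu b Pb Hb) (Hu c Pc Hc). reflexivity. }
  assert (Idm : forall e f, P e -> P f -> mul e e = e -> mul f f = f ->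
             mul (mul e f) (mul e f) = mul e f).
  { intros e f Pe Pf He Hf. set (a := mul e f).
    assert (Pa : P a) by (apply clos; auto).
    destruct (Hinv a Pa) as [x [Px [[Hx1 Hx2] Hu]]].
    assert (He2 : forall z, mul e (mul e z) = mul e z) by (intro z; rewrite -massoc He; reflexivity).
    assert (Hf2 : forall z, mul f (mul f z) = mul f z) by (intro z; rewrite -massoc Hf; reflexivity).
    assert (Hx2c : forall z, mul x (mul e (mul f (mul x z))) = mul x z).
    { intro z. unfold a in Hx2. pose proof (f_equal (fun w => mul w z) Hx2) as E. simpl in E. rewrite !massoc in E. exact E. }
    assert (Hx1' : mul e (mul f (mul x (mul e f))) = mul e f).
    { unfold a in Hx1. rewrite !massoc in Hx1. exact Hx1. }
    set (y := mul f (mul x e)).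
    assert (Py : P y) by (unfold y; auto).
    assert (Hy : Defs.inv_pair mul a y).
    { unfold a, y. split.
      - rewrite !massoc Hf2 He2. exact Hx1'.
      - rewrite !massoc He2 Hf2 Hx2c. reflexivity. }
    assert (Eyx : y = x) by (apply Hu; auto).
    assert (Hyy : mul y y = y).
    { unfold y. rewrite !massoc Hx2c. reflexivity. }
    assert (Hxx : mul x x = x) by (rewrite -Eyx; exact Hyy).
    assert (I1 : Defs.inv_pair mul x x) by (split; rewrite !Hxx; auto).
    assert (I2 : Defs.inv_pair mul x a) by (split; auto).
    assert (Eax : x = a) by (apply (Uq x); auto).
    rewrite -Eax. exact Hxx. }
  intros e f Pe Pf He Hf.
  assert (Ief := Idm e f Pe Pf He Hf). assert (Ife := Idm f e Pf Pe Hf He).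
  assert (Pef : P (mul e f)) by auto. assert (Pfe : P (mul f e)) by auto.
  apply (Uq (mul e f)); auto.
  - split; rewrite ?Ief; auto.
  - split.
    + replace (mul (mul (mul e f) (mul f e)) (mul e f)) with (mul (mul e f) (mul e f)).
      * exact Ief.
      * rewrite !massoc. rewrite -(massoc f f) Hf -(massoc e e) He. reflexivity.
    + replace (mul (mul (mul f e) (mul e f)) (mul f e)) with (mul (mul f e) (mul f e)).
      * exact Ife.
      * rewrite !massoc. rewrite -(massoc e e) He -(massoc f f) Hf. reflexivity.
Qed.

End Abstract.

Section Transfer.
Variables (U : Type) (P : U -> Prop) (m1 m2 : U -> U -> U).
Hypothesis agree : forall x y, P x -> P y -> m1 x y = m2 x y.
Hypothesis c1 : forall x y, P x -> P y -> P (m1 x y).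
Hypothesis c2 : forall x y, P x -> P y -> P (m2 x y).

Lemma tr_comm : sg_commutative P m1 -> sg_commutative P m2.
Proof. intros H x y Px Py. rewrite -!agree; auto. Qed.

Lemma tr_sub G : is_subgroup P m1 G -> is_subgroup P m2 G.
Proof.
  intros [GP [Gcl [e [Ge [Hid Hinv]]]]]. split; [auto|split].
  - intros a b Ga Gb. rewrite -agree; auto.
  - exists e. split; auto. split.
    + intros a Ga. rewrite -!agree; auto.
    + intros a Ga. destruct (Hinv a Ga) as [b [Gb H]]. exists b. rewrite -!agree; auto.
Qed.

Lemma tr_clif : sg_clifford P m1 -> sg_clifford P m2.
Proof. intros H x Px. destruct (H x Px) as [G [HG Gx]]. exists G. split; auto. apply tr_sub; auto. Qed.

Lemma tr_canc T : is_cancellative_subsemigroup P m1 T -> is_cancellative_subsemigroup P m2 T.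
Proof.
  intros [TP [Tcl [L R]]]. split. exact TP. split.
  { intros a0 b0 Ta Tb. rewrite -agree; auto. } split.
  { intros a0 b0 c0 Ta Tb Tc. rewrite -!agree; eauto. }
  { intros a0 b0 c0 Ta Tb Tc. rewrite -!agree; eauto. }
Qed.

Lemma tr_subclif : sg_subclifford P m1 -> sg_subclifford P m2.
Proof. intros H x Px. destruct (H x Px) as [T [HT Tx]]. exists T. split; auto. apply tr_canc; auto. Qed.

Lemma tr_reg : sg_regular P m1 -> sg_regular P m2.
Proof. intros H x Px. destruct (H x Px) as [s [Ps E]]. exists s. split; auto. rewrite -!agree; auto. Qed.


Lemma tr_ic : idempotents_commute P m1 -> idempotents_commute P m2.
Proof. intros H e f Pe Pf He Hf. rewrite -!agree; auto. apply H; auto; rewrite agree; auto. Qed.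

End Transfer.

Lemma tr_ip U (P : U -> Prop) m1 m2 (agree : forall x y, P x -> P y -> m1 x y = m2 x y)
  (c1 : forall x y, P x -> P y -> P (m1 x y)) x y :
  P x -> P y -> Defs.inv_pair m1 x y -> Defs.inv_pair m2 x y.
Proof. intros Px Py [H1 H2]. split; rewrite -!agree; auto. Qed.

Lemma tr_inv U (P : U -> Prop) m1 m2 :
  (forall x y, P x -> P y -> m1 x y = m2 x y) ->
  (forall x y, P x -> P y -> P (m1 x y)) -> (forall x y, P x -> P y -> P (m2 x y)) ->
  sg_inverse P m1 -> sg_inverse P m2.
Proof.
  intros ag c1 c2 H x Px. destruct (H x Px) as [y [Py [Ip Hu]]]. exists y. split; auto. split.
  - exact (tr_ip _ _ _ _ ag c1 x y Px Py Ip).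
  - intros z Pz Iz. apply Hu; auto.
    assert (ag' : forall a b, P a -> P b -> m2 a b = m1 a b) by (intros; symmetry; auto).
    exact (tr_ip _ _ _ _ ag' c2 x z Px Pz Iz).
Qed.

Lemma um {X : Type} (op : X -> X -> X) x y : N2 x -> N2 y -> up_mul op x y = M op x y.
Proof. intros Hx Hy. apply up_mul_M; apply N2_upc; auto. Qed.

Lemma N2_um {X : Type} (op : X -> X -> X) x y : N2 x -> N2 y -> N2 (up_mul op x y).
Proof. intros Hx Hy. rewrite um; auto. apply N2_M; auto. Qed.

Section Period.
Variables (X : Type) (op : X -> X -> X).
Hypothesis op_assoc : forall a b c, op (op a b) c = op a (op b c).

Definition ICM := forall e f, N2 e -> N2 f -> M op e e = e -> M op f f = f -> M op e f = M op f e.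

Fixpoint pw (x : X) (k : nat) : X := match k with 0 => x | S k' => op (pw x k') x end.

Lemma pw_add x i j : op (pw x i) (pw x j) = pw x (S (i + j)).
Proof.
  induction j as [|j IH].
  - rewrite addn0. reflexivity.
  - simpl. rewrite -op_assoc IH addnS. reflexivity.
Qed.

Lemma pw_shift x a b m : pw x a = pw x b -> pw x (a + m) = pw x (b + m).
Proof. intro H. induction m as [|m IH]. - rewrite !addn0. exact H. - rewrite !addnS. simpl. rewrite IH. reflexivity. Qed.

Definition Zf (x : X) : (X -> Prop) -> Prop := fun C => exists n, forall k, n <= k -> C (pw x k).
Definition Df (x : X) : (X -> Prop) -> Prop := fun C =>
  (C (pw x 0) /\ C (pw x 1)) \/ (C (pw x 0) /\ C (pw x 2)) \/ (C (pw x 1) /\ C (pw x 2)).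

Lemma N2_Z x : N2 (Zf x).
Proof.
  unfold Zf. split; [split|].
  - intros C [n H]. exists (pw x n). apply H. lia.
  - intros C C' [n H] HC. exists n. intros k Hk. apply HC, H, Hk.
  - intros C C' [n H] [m H']. exists (pw x (n + m)). split; [apply H|apply H']; lia.
Qed.

Lemma N2_D x : N2 (Df x).
Proof.
  unfold Df. split; [split|].
  - intros C H. destruct H as [[H _]|[[H _]|[H _]]]; eauto.
  - intros C C' H HC. destruct H as [[H1 H2]|[[H1 H2]|[H1 H2]]]; auto.
  - intros C C' H H'.
    destruct H as [[H1 H2]|[[H1 H2]|[H1 H2]]]; destruct H' as [[H1' H2']|[[H1' H2']|[H1' H2']]]; eauto.
Qed.

Lemma Z_shift x i C : Zf x (fun b => C (op (pw x i) b)) <-> Zf x C.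
Proof.
  unfold Zf. split.
  - intros [n H]. exists (S (i + n)). intros k Hk.
    specialize (H (k - S i)). rewrite pw_add in H.
    replace (S (i + (k - S i))) with k in H by lia. apply H. lia.
  - intros [n H]. exists n. intros k Hk. rewrite pw_add. apply H. lia.
Qed.

Lemma MZZ x : M op (Zf x) (Zf x) = Zf x.
Proof.
  apply fam_ext. intro C. unfold M. split.
  - intros [n H]. specialize (H n (leqnn n)). apply (Z_shift x n C). exact H.
  - intro H. exists 0. intros k _. apply (Z_shift x k C). exact H.
Qed.

Lemma MDZ x : M op (Df x) (Zf x) = Zf x.
Proof.
  apply fam_ext. intro C. unfold M, Df. rewrite !Z_shift. tauto.
Qed.

Lemma period x : ICM -> exists i, pw x (S (S i)) = pw x i.
Proof.
  intro IC.
  set (Z := Zf x). set (D := Df x). set (E := M op Z D).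
  assert (NZ : N2 Z) by apply N2_Z. assert (ND : N2 D) by apply N2_D.
  assert (NE : N2 E) by (apply N2_M; auto).
  assert (ZZ : M op Z Z = Z) by apply MZZ.
  assert (DZ : M op D Z = Z) by apply MDZ.
  assert (EE : M op E E = E).
  { unfold E. rewrite !M_assoc; auto. rewrite -(M_assoc op op_assoc D Z D) DZ.
    rewrite -(M_assoc op op_assoc Z Z D) ZZ. reflexivity. }
  assert (H := IC Z E NZ NE ZZ EE).
  assert (ZE : M op Z E = E) by (unfold E; rewrite -M_assoc; auto; rewrite ZZ; reflexivity).
  assert (EZ : M op E Z = Z) by (unfold E; rewrite M_assoc; auto; rewrite DZ ZZ; reflexivity).
  rewrite ZE EZ in H.
  assert (HE : forall C, (exists n, forall k, n <= k -> Df x (fun b => C (op (pw x k) b))) -> Zf x C).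
  { intros C HC. change (Z C). rewrite -H. exact HC. }
  apply NNPP. intro NH.
  assert (N0 : forall i, pw x (S (S i)) <> pw x i) by (intros i Hi; apply NH; eauto).
  assert (N1 : forall i, pw x (S i) <> pw x i).
  { intros i Hi. apply (N0 i). simpl. simpl in Hi. rewrite Hi. exact Hi. }
  destruct (classic (exists i j, i < j /\ pw x i = pw x j)) as [[i [j [Hij Eij]]]|Hnp].
  - set (C := fun y => y <> pw x i).
    assert (ZC : Zf x C).
    { apply HE. exists 0. intros k _. unfold Df. rewrite !pw_add.
      rewrite !addn0 !addn1 !addn2.
      unfold C.
      assert (F12 : ~ (pw x (S k) = pw x i /\ pw x (S (S k)) = pw x i)).
      { intros [A B]. apply (N1 (S k)). rewrite A B. reflexivity. }
      assert (F13 : ~ (pw x (S k) = pw x i /\ pw x (S (S (S k))) = pw x i)).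
      { intros [A B]. apply (N0 (S k)). rewrite A B. reflexivity. }
      assert (F23 : ~ (pw x (S (S k)) = pw x i /\ pw x (S (S (S k))) = pw x i)).
      { intros [A B]. apply (N1 (S (S k))). rewrite A B. reflexivity. }
      destruct (classic (pw x (S k) = pw x i)); destruct (classic (pw x (S (S k)) = pw x i));
        destruct (classic (pw x (S (S (S k))) = pw x i)); tauto. }
    destruct ZC as [n Hn].
    set (d := j - i).
    assert (Per : forall t, pw x (i + t * d) = pw x i).
    { induction t as [|t IH].
      - rewrite mul0n addn0. reflexivity.
      - have Sh := pw_shift x i j (t * d) Eij.
        assert (Eid : i + d = j) by (unfold d; lia).
        rewrite mulSn addnA Eid -Sh. exact IH. }
    apply (Hn (i + n * d)).
    + unfold d. have : n <= n * (j - i) by (rewrite leq_pmulr; lia). lia.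
    + apply Per.
  - assert (Inj : forall i j, pw x i = pw x j -> i = j).
    { intros i j Eij. destruct (ltngtP i j) as [Hl|Hl|Hl]; auto.
      - exfalso. apply Hnp. eauto.
      - exfalso. apply Hnp. exists j, i. split; auto. }
    set (C := fun y => exists m, y = pw x m /\ ~ (exists t, m = 3 * t)).
    assert (D3 : forall k, exists q, k = 3 * q \/ k = 3 * q + 1 \/ k = 3 * q + 2).
    { induction k as [|k [q [Hq|[Hq|Hq]]]].
      - exists 0. left. reflexivity.
      - exists q. right; left. lia.
      - exists q. right; right. lia.
      - exists (S q). left. lia. }
    assert (ZC : Zf x C).
    { apply HE. exists 0. intros k _. unfold Df. rewrite !pw_add.
      rewrite !addn0 !addn1 !addn2. unfold C.
      destruct (D3 k) as [q [Hq|[Hq|Hq]]].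
      - left. split.
        + exists (S k). split; auto. intros [t Ht]. lia.
        + exists (S (S k)). split; auto. intros [t Ht]. lia.
      - right; left. split.
        + exists (S k). split; auto. intros [t Ht]. lia.
        + exists (S (S (S k))). split; auto. intros [t Ht]. lia.
      - right; right. split.
        + exists (S (S k)). split; auto. intros [t Ht]. lia.
        + exists (S (S (S k))). split; auto. intros [t Ht]. lia. }
    destruct ZC as [n Hn]. destruct (Hn (3 * n)) as [m [Em Hm]]; [lia|].
    apply Inj in Em. apply Hm. exists n. auto.
Qed.

End Period.

Section Cube.
Variables (X : Type) (op : X -> X -> X).
Hypothesis op_assoc : forall a b c, op (op a b) c = op a (op b c).
Notation pwx := (pw X op).
Notation ICM := (ICM X op).

Definition SCM := forall A, N2 A -> exists T, is_cancellative_subsemigroup (@N2 X) (M op) T /\ T A.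
Definition RGM := forall A, N2 A -> exists s, N2 s /\ A = M op (M op A s) A.

Lemma down x : (forall i, pwx x (S (S (S i))) = pwx x (S i) -> pwx x (S (S i)) = pwx x i) ->
  (exists i, pwx x (S (S i)) = pwx x i) -> op (op x x) x = x.
Proof.
  intros St [i Hi]. change (pwx x 2 = pwx x 0).
  induction i as [|i IH]; auto.
Qed.

Lemma pw_left x k : op x (pwx x k) = pwx x (S k).
Proof. exact (pw_add X op op_assoc x 0 k). Qed.

Lemma cube_SC : ICM -> SCM -> forall x, op (op x x) x = x.
Proof.
  intros IC SC x. apply down; [|apply period; auto].
  destruct (SC (pr x) (N2_pr x)) as [T [[TP [Tcl [L R]]] Tx]].
  assert (Tp : forall k, T (pr (pwx x k))).
  { induction k as [|k IH]; auto. exact (Tcl _ _ IH Tx). }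
  intros i Hi. apply pr_inj. apply (L (pr x)); auto.
  rewrite !M_pr !pw_left. rewrite Hi. reflexivity.
Qed.

Lemma reg_RG : RGM -> forall x, exists y, op (op x y) x = x.
Proof.
  intros RG x. destruct (RG (pr x) (N2_pr x)) as [s [Ns E]].
  assert (H := equal_f E (fun z => z = x)). unfold M, pr in H. simpl in H.
  assert (Hs : s (fun c => op (op x c) x = x)) by (rewrite -H; reflexivity).
  destruct Ns as [[ne _] _]. destruct (ne _ Hs) as [y Hy]. eauto.
Qed.

Lemma central : ICM -> (forall x, exists y, op (op x y) x = x) ->
  forall e, op e e = e -> forall a, op a e = op e a.
Proof.
  intros IC RG e He.
  set (T := fun C : X -> Prop => forall z, C z).
  assert (NT : N2 T).
  { unfold T. split; [split|]. - intros A HA. exists e. apply HA. - intros A B HA HB z. auto. - intros A B HA HB. exists e. auto. }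
  assert (TT : M op T T = T).
  { apply fam_ext. intro C. unfold M, T. split; auto.
    intros H z. destruct (RG z) as [y Hy]. rewrite -Hy op_assoc. apply H. }
  assert (Pe : M op (pr e) (pr e) = pr e) by (rewrite M_pr He; reflexivity).
  assert (H := IC (pr e) T (N2_pr e) NT Pe TT).
  assert (H1 := equal_f H (fun w => exists b, w = op e b)).
  assert (H2 := equal_f H (fun w => exists b, w = op b e)).
  unfold M, pr, T in H1, H2.
  assert (A1 : forall a, exists b, op a e = op e b) by (rewrite -H1; eauto).
  assert (A2 : forall b, exists a, op e b = op a e) by (rewrite H2; eauto).
  intro a.
  assert (B1 : op e (op a e) = op a e).
  { destruct (A1 a) as [b Hb]. rewrite Hb -op_assoc He. reflexivity. }
  assert (B2 : op (op e a) e = op e a).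
  { destruct (A2 a) as [b Hb]. rewrite Hb op_assoc He. reflexivity. }
  rewrite -B1 -op_assoc B2. reflexivity.
Qed.

Lemma cube_RG : ICM -> RGM -> forall x, op (op x x) x = x.
Proof.
  intros IC RG x. destruct (reg_RG RG x) as [y Hy].
  assert (C := central IC (reg_RG RG)).
  set (f := op y x).
  assert (Hf : op f f = f) by (unfold f; rewrite op_assoc -(op_assoc x y x) Hy; reflexivity).
  assert (Hpf : forall k, op (pwx x k) f = pwx x k).
  { induction k as [|k IH].
    - simpl. unfold f. rewrite -op_assoc Hy. reflexivity.
    - simpl. rewrite op_assoc. unfold f. rewrite -(op_assoc x y x) Hy. reflexivity. }
  assert (Hy' : forall k, op y (pwx x (S k)) = pwx x k).
  { intro k. rewrite -pw_left -op_assoc. fold f. rewrite -(C f Hf). apply Hpf. }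
  apply down; [|apply period; auto].
  intros i Hi. rewrite -(Hy' (S (S i))) -(Hy' i) Hi. reflexivity.
Qed.

Lemma cube_all : ICM -> (SCM \/ RGM) -> forall x, op (op x x) x = x.
Proof. intros IC [S|R]; [apply cube_SC|apply cube_RG]; auto. Qed.

Lemma commX : ICM -> (forall x, op (op x x) x = x) -> forall x y, op x y = op y x.
Proof.
  intros IC Cu.
  assert (Rg : forall x, exists y, op (op x y) x = x) by eauto.
  assert (Ce := central IC Rg).
  assert (L : forall x y, op (op (op x y) (op y x)) (op x y) = op x y).
  { intros x y. set (e := op x x). set (f := op y y).
    assert (He : op e e = e) by (unfold e; rewrite -op_assoc Cu; reflexivity).
    assert (Hf : op f f = f) by (unfold f; rewrite -op_assoc Cu; reflexivity).
    assert (Hxx : forall z, op x (op x z) = op e z) by (intro z; unfold e; rewrite op_assoc; reflexivity).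
    assert (Hyy : forall z, op y (op y z) = op f z) by (intro z; unfold f; rewrite op_assoc; reflexivity).
    assert (Xe : forall z, op x (op e z) = op x z).
    { intro z. rewrite -op_assoc. unfold e. rewrite -op_assoc Cu. reflexivity. }
    assert (Fy : op f y = y) by (unfold f; apply Cu).
    assert (Cef := Ce f Hf x). clearbody e f.
    assert (Cf : forall a z, op a (op f z) = op f (op a z)).
    { intros a z. rewrite -(op_assoc a f z) -(op_assoc f a z) (Ce f Hf a). reflexivity. }
    rewrite !op_assoc Hyy Hxx Cf Xe -(op_assoc f x y) -Cef op_assoc Fy. reflexivity. }
  intros x y.
  assert (ICX : idempotents_commute (fun _ : X => True) op).
  { intros e f _ _ He Hf. apply Ce; auto. }
  symmetry.
  apply (inv_unique X (fun _ => True) op op_assoc (fun _ _ _ _ => I) ICX (op x y) (op y x) (op x y) I I I).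
  - split; [apply L|apply L].
  - split; apply Cu.
Qed.

End Cube.

Section Struct.
Variables (X : Type) (op : X -> X -> X).
Hypothesis op_assoc : forall a b c, op (op a b) c = op a (op b c).
Hypothesis IC : ICM X op.
Hypothesis Cu : forall x, op (op x x) x = x.
Hypothesis Cm : forall x y, op x y = op y x.

Lemma lcomm a b c : op a (op b c) = op b (op a c).
Proof. rewrite -!op_assoc (Cm a b). reflexivity. Qed.

Lemma SC_F : SCM X op -> forall (F : X -> Prop) a0, F a0 ->
  M op (fl F) (M op (fl F) (fl F)) = M op (fl F) (fl F) ->
  forall a b, F a -> F b -> F (op a b).
Proof.
  intros SC F a0 Fa0 E.
  destruct (SC (fl F) (N2_fl F a0 Fa0)) as [T [[TP [Tcl [L R]]] Tf]].
  assert (T2 : T (M op (fl F) (fl F))) by auto.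
  assert (E2 : M op (fl F) (fl F) = fl F).
  { apply (L (fl F)); auto. }
  assert (H := equal_f E2 F). unfold M, fl in H.
  assert (H' : forall a, F a -> forall b, F b -> F (op a b)) by (rewrite H; auto).
  intros a b Fa Fb. apply H'; auto.
Qed.

Lemma RG_F : RGM X op -> forall (F : X -> Prop) a0, F a0 ->
  exists y, forall b, F b -> F (op (op a0 y) b).
Proof.
  intros RG F a0 Fa0. destruct (RG (fl F) (N2_fl F a0 Fa0)) as [s [Ns E]].
  assert (H := equal_f E F). unfold M, fl in H.
  assert (H' : forall a, F a -> s (fun c => forall b, F b -> F (op (op a c) b))) by (rewrite -H; auto).
  destruct Ns as [[ne _] _]. destruct (ne _ (H' a0 Fa0)) as [y Hy]. eauto.
Qed.

Lemma chain (SR : SCM X op \/ RGM X op) e f : op e e = e -> op f f = f -> op e f = e \/ op e f = f.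
Proof.
  intros He Hf. set (F := fun z => z = e \/ z = f).
  destruct SR as [SC|RG].
  - assert (Fef : F (op e f)); [|destruct Fef; auto].
    apply (SC_F SC F e (or_introl erefl)); [|left|right]; auto.
    apply fam_ext. intro C. unfold M, fl. split.
    + intros H a Fa b Fb. assert (Ebb : op b b = b) by (destruct Fb as [->| ->]; auto).
      rewrite -Ebb. apply H; auto.
    + intros H a Fa b Fb c Fc.
      destruct Fa as [->| ->]; destruct Fb as [->| ->]; destruct Fc as [->| ->].
      * rewrite He. apply H; unfold F; auto.
      * rewrite -op_assoc He. apply H; unfold F; auto.
      * rewrite (Cm f e) -op_assoc He. apply H; unfold F; auto.
      * rewrite Hf. apply H; unfold F; auto.
      * rewrite He. apply H; unfold F; auto.
      * rewrite lcomm Hf. apply H; unfold F; auto.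
      * rewrite -op_assoc Hf. apply H; unfold F; auto.
      * rewrite Hf. apply H; unfold F; auto.
  - destruct (RG_F RG F e (or_introl erefl)) as [y Hy].
    assert (Fg := Hy f (or_intror erefl)).
    set (g := op e f).
    assert (Eg : op (op e y) f = op g y) by (unfold g; rewrite !op_assoc (Cm y f); reflexivity).
    rewrite Eg in Fg.
    assert (Gg : op g g = g).
    { unfold g. rewrite op_assoc (lcomm f e f) -(op_assoc e e) He Hf. reflexivity. }
    destruct Fg as [Gy|Gy].
    + left. fold g. transitivity (op g e).
      * unfold g. rewrite op_assoc (Cm f e) -op_assoc He. reflexivity.
      * rewrite -Gy -op_assoc Gg. reflexivity.
    + right. fold g. transitivity (op g f).
      * unfold g. rewrite op_assoc Hf. reflexivity.
      * rewrite -Gy -op_assoc Gg. reflexivity.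
Qed.

End Struct.

Section Conf.
Variables (X : Type) (op : X -> X -> X).
Hypothesis op_assoc : forall a b c, op (op a b) c = op a (op b c).
Hypothesis IC : ICM X op.
Hypothesis Cu : forall x, op (op x x) x = x.
Hypothesis Cm : forall x y, op x y = op y x.

Lemma group3 e x z : op x x = e -> op z z = e -> x <> e -> z <> e -> z <> x -> False.
Proof.
  intros Hx Hz nxe nze nzx.
  set (H := fun w => op w w = e).
  assert (We : forall w, H w -> op w e = w).
  { intros w Hw. unfold H in Hw. rewrite -Hw -op_assoc. apply Cu. }
  assert (He : H e).
  { unfold H. rewrite -{1}Hx op_assoc (We x Hx). exact Hx. }
  assert (Eid : forall w, H w -> op e w = w) by (intros w Hw; rewrite Cm; auto).
  assert (Hcl : forall a b, H a -> H b -> H (op a b)).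
  { intros a b Ha Hb. unfold H in *. rewrite op_assoc (lcomm X op op_assoc Cm b a b) -op_assoc Ha Hb.
    rewrite -{1}Ha op_assoc We; auto. }
  assert (Inv : forall a b, H a -> H b -> op a (op a b) = b).
  { intros a b Ha Hb. rewrite -op_assoc Ha. auto. }
  assert (Hx' : H x) by exact Hx. assert (Hz' : H z) by exact Hz.
  set (Q := fun C : X -> Prop => forall p q, H p -> H q -> ~ C p -> ~ C q -> p = q).
  set (T := fun C : X -> Prop => forall p, H p -> C p).
  assert (Qext : forall S1 S2, (forall a, H a -> (S1 a <-> S2 a)) -> (Q S1 <-> Q S2)).
  { intros S1 S2 HS. unfold Q. split; intros HQ p q Hp Hq np nq; apply HQ; auto;
      [rewrite HS|rewrite HS|rewrite -HS|rewrite -HS]; auto. }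
  assert (Qconst : forall P0 : Prop, Q (fun _ => P0) <-> P0).
  { intro P0. unfold Q. split.
    - intro HQ. apply NNPP. intro nP. apply nxe. apply HQ; auto.
    - intros HP p q _ _ np. contradiction. }
  assert (Qshift : forall a C, H a -> (Q (fun b => C (op a b)) <-> Q C)).
  { intros a C Ha. unfold Q. split.
    - intros HQ p q Hp Hq np nq.
      assert (E : op a p = op a q).
      { apply HQ; auto; rewrite Inv; auto. }
      rewrite -(Inv a p) // -(Inv a q) // E. reflexivity.
    - intros HQ p q Hp Hq np nq.
      assert (E : op a p = op a q) by (apply HQ; auto).
      rewrite -(Inv a p) // -(Inv a q) // E. reflexivity. }
  assert (Tshift : forall a C, H a -> ((forall b, H b -> C (op a b)) <-> T C)).
  { intros a C Ha. unfold T. split.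
    - intros HT p Hp. rewrite -(Inv a p) //. apply HT. auto.
    - intros HT b Hb. apply HT. auto. }
  assert (NQ : N2 Q).
  { split; [split|].
    - intros C HC. destruct (classic (C e)) as [Ce|nCe]; [eauto|].
      destruct (classic (C x)) as [Cx|nCx]; [eauto|].
      exfalso. apply nxe. apply HC; auto.
    - intros C C' HC HCC' p q Hp Hq np nq. apply HC; auto.
    - intros C1 C2 H1 H2. apply NNPP. intro Nex.
      assert (nxe' : e <> x) by (intro E; apply nxe; auto).
      assert (nze' : e <> z) by (intro E; apply nze; auto).
      assert (nzx' : x <> z) by (intro E; apply nzx; auto).
      destruct (classic (C1 e)); destruct (classic (C1 x)); destruct (classic (C1 z));
      destruct (classic (C2 e)); destruct (classic (C2 x)); destruct (classic (C2 z));
      first [ apply Nex; exists e; split; assumption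
            | apply Nex; exists x; split; assumption
            | apply Nex; exists z; split; assumption
            | apply nxe'; apply H1; assumption | apply nze'; apply H1; assumption
            | apply nzx'; apply H1; assumption
            | apply nxe'; apply H2; assumption | apply nze'; apply H2; assumption
            | apply nzx'; apply H2; assumption ]. }
  assert (NT : N2 T).
  { unfold T. split; [split|].
    - intros C HC. exists e. auto.
    - intros C C' HC HCC' p Hp. auto.
    - intros C C' HC HC'. exists e. auto. }
  assert (QQ : M op Q Q = Q).
  { apply fam_ext. intro C. unfold M.
    transitivity (Q (fun _ => Q C)); [apply Qext; intros a Ha; apply Qshift; auto|apply Qconst]. }
  assert (TT : M op T T = T).
  { apply fam_ext. intro C. unfold M. split.
    - intro HT. apply (Tshift e C He). apply HT. auto.
    - intros HT a Ha. exact (proj2 (Tshift a C Ha) HT). }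
  assert (QT : M op Q T = T).
  { apply fam_ext. intro C. unfold M.
    transitivity (Q (fun _ => T C)); [apply Qext; intros a Ha; apply Tshift; auto|apply Qconst]. }
  assert (TQ : M op T Q = Q).
  { apply fam_ext. intro C. unfold M. split.
    - intro HT. apply (Qshift e C He). apply HT. auto.
    - intros HQ a Ha. exact (proj2 (Qshift a C Ha) HQ). }
  assert (E := IC Q T NQ NT QQ TT). rewrite QT TQ in E.
  assert (E2 := equal_f E (fun w => w <> x)).
  assert (HQ : Q (fun w => w <> x)).
  { unfold Q. intros p q _ _ np nq. apply NNPP in np. apply NNPP in nq. subst. reflexivity. }
  rewrite -E2 in HQ. apply (HQ x Hx'). reflexivity.
Qed.

End Conf.

Section Conf2.
Variables (X : Type) (op : X -> X -> X).
Hypothesis op_assoc : forall a b c, op (op a b) c = op a (op b c).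
Hypothesis IC : ICM X op.
Hypothesis Cu : forall x, op (op x x) x = x.
Hypothesis Cm : forall x y, op x y = op y x.

Lemma dconf u w l : op u u = u -> op w w = u -> w <> u -> op l l = l -> op l u = l -> l <> u -> False.
Proof.
  intros Hu Hw nwu Hl Hlu nlu.
  assert (lc := lcomm X op op_assoc Cm).
  set (lw := op l w).
  assert (wu : op w u = w) by (rewrite -Hw -op_assoc; apply Cu).
  assert (uw : op u w = w) by (rewrite Cm; exact wu).
  assert (ul : op u l = l) by (rewrite Cm; exact Hlu).
  assert (wl : op w l = lw) by (unfold lw; apply Cm).
  assert (l_lw : op l lw = lw) by (unfold lw; rewrite -op_assoc Hl; reflexivity).
  assert (u_lw : op u lw = lw) by (unfold lw; rewrite -op_assoc ul; reflexivity).
  assert (w_lw : op w lw = l) by (unfold lw; rewrite lc Hw Hlu; reflexivity).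
  assert (lw_l : op lw l = lw) by (rewrite Cm; exact l_lw).
  assert (lw_u : op lw u = lw) by (unfold lw; rewrite op_assoc wu; reflexivity).
  assert (lw_w : op lw w = l) by (unfold lw; rewrite op_assoc Hw Hlu; reflexivity).
  assert (lw_lw : op lw lw = l) by (unfold lw at 1; rewrite op_assoc w_lw Hl; reflexivity).
  assert (lwd : op l w = lw) by reflexivity.
  clearbody lw.
  set (D := fun C : X -> Prop => C l /\ C lw /\ (C u \/ C w)).
  set (T := fun C : X -> Prop => C u /\ C w /\ C l /\ C lw).
  assert (ND : N2 D).
  { unfold D. split; [split|].
    - intros C [H _]. eauto.
    - intros C C' [H1 [H2 H3]] HC. destruct H3; auto.
    - intros C C' [H _] [H' _]. eauto. }
  assert (NT : N2 T).
  { unfold T. split; [split|].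
    - intros C [H _]. eauto.
    - intros C C' [H1 [H2 [H3 H4]]] HC. auto.
    - intros C C' [H _] [H' _]. eauto. }
  assert (DD : M op D D = D).
  { apply fam_ext. intro C. unfold M, D. cbv beta.
    do 2 rewrite ?lwd ?Hl ?l_lw ?Hlu ?lw_l ?lw_lw ?lw_u ?lw_w ?ul ?u_lw ?Hu ?uw ?wl ?w_lw ?wu ?Hw. tauto. }
  assert (TT : M op T T = T).
  { apply fam_ext. intro C. unfold M, T. cbv beta.
    do 2 rewrite ?lwd ?Hl ?l_lw ?Hlu ?lw_l ?lw_lw ?lw_u ?lw_w ?ul ?u_lw ?Hu ?uw ?wl ?w_lw ?wu ?Hw. tauto. }
  assert (DT : M op D T = T).
  { apply fam_ext. intro C. unfold M, D, T. cbv beta.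
    do 2 rewrite ?lwd ?Hl ?l_lw ?Hlu ?lw_l ?lw_lw ?lw_u ?lw_w ?ul ?u_lw ?Hu ?uw ?wl ?w_lw ?wu ?Hw. tauto. }
  assert (TD : M op T D = D).
  { apply fam_ext. intro C. unfold M, D, T. cbv beta.
    do 2 rewrite ?lwd ?Hl ?l_lw ?Hlu ?lw_l ?lw_lw ?lw_u ?lw_w ?ul ?u_lw ?Hu ?uw ?wl ?w_lw ?wu ?Hw. tauto. }
  assert (E := IC D T ND NT DD TT). rewrite DT TD in E.
  assert (E2 := equal_f E (fun z => z = u \/ z = l \/ z = lw)).
  unfold D, T in E2.
  assert (Hw' : w = u \/ w = l \/ w = lw).
  { assert (HD : (l = u \/ l = l \/ l = lw) /\ (lw = u \/ lw = l \/ lw = lw) /\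
            ((u = u \/ u = l \/ u = lw) \/ (w = u \/ w = l \/ w = lw))) by tauto.
    rewrite -E2 in HD. tauto. }
  destruct Hw' as [E'|[E'|E']].
  - auto.
  - apply nlu. rewrite -Hl -Hw E'. reflexivity.
  - apply nlu. rewrite -w_lw -E' Hw. reflexivity.
Qed.

End Conf2.

Section Conf3.
Variables (X : Type) (op : X -> X -> X).
Hypothesis op_assoc : forall a b c, op (op a b) c = op a (op b c).
Hypothesis Cu : forall x, op (op x x) x = x.
Hypothesis Cm : forall x y, op x y = op y x.

Lemma c21conf (SR : SCM X op \/ RGM X op) e x f :
  op x x = e -> x <> e -> op f f = f -> f <> e -> op e f = e -> False.
Proof.
  intros Hx nxe Hf nfe Hef.
  assert (xe : op x e = x) by (rewrite -Hx -op_assoc; apply Cu).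
  assert (ex : op e x = x) by (rewrite Cm; exact xe).
  assert (He : op e e = e) by (rewrite -{1}Hx op_assoc xe; exact Hx).
  assert (fe : op f e = e) by (rewrite Cm; exact Hef).
  assert (fx : op f x = x) by (rewrite -{1}ex -op_assoc fe ex; reflexivity).
  assert (xf : op x f = x) by (rewrite Cm; exact fx).
  set (F := fun z => z = f \/ z = x).
  destruct SR as [SC|RG].
  - assert (Fxx : F (op x x)); [|rewrite Hx in Fxx; destruct Fxx as [E|E]; auto].
    apply (SC_F X op SC F f (or_introl erefl)); [|right|right]; auto.
    apply fam_ext. intro C. unfold M, fl. split.
    + intros H a Fa b Fb. assert (Ebb : op b f = b) by (destruct Fb as [->| ->]; auto).
      rewrite -Ebb. apply H; unfold F; auto.
    + intros H. assert (Cf : C f) by (rewrite -{1}Hf; apply H; unfold F; auto).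
      assert (Cx : C x) by (rewrite -{1}fx; apply H; unfold F; auto).
      assert (Ce : C e) by (rewrite -Hx; apply H; unfold F; auto).
      intros a Fa b Fb c Fc.
      destruct Fa as [->| ->]; destruct Fb as [->| ->]; destruct Fc as [->| ->];
        rewrite ?Hf ?fx ?xf ?Hx ?fe ?xe ?Hf ?fx ?xf ?Hx ?fe ?xe; assumption.
  - destruct (RG_F X op RG F x (or_intror erefl)) as [y Hy].
    assert (E1 : op (op x y) x = op e y).
    { rewrite op_assoc (Cm y x) -op_assoc Hx. reflexivity. }
    assert (F1 := Hy x (or_intror erefl)). rewrite E1 in F1.
    destruct F1 as [Ey|Ey].
    + assert (Ef : op e f = f) by (rewrite -{1}Ey -op_assoc He; exact Ey).
      apply nfe. rewrite Hef in Ef. symmetry. exact Ef.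
    + assert (Exy : op x y = e) by (rewrite -{1}xe op_assoc Ey Hx; reflexivity).
      assert (F2 := Hy f (or_introl erefl)). rewrite Exy Hef in F2.
      destruct F2 as [E|E]; auto.
Qed.

End Conf3.

Section Tails.
Variables (X : Type) (op : X -> X -> X).
Hypothesis op_assoc : forall a b c, op (op a b) c = op a (op b c).

Definition TF (h : nat -> X) : (X -> Prop) -> Prop := fun C => exists N, forall k, N <= k -> C (h k).

Lemma N2_TF h : N2 (TF h).
Proof.
  unfold TF. split; [split|].
  - intros C [N H]. exists (h N). apply H. lia.
  - intros C C' [N H] HC. exists N. auto.
  - intros C C' [N H] [N' H']. exists (h (N + N')). split; [apply H|apply H']; lia.
Qed.

Lemma TF_ext h S1 S2 : (forall k, S1 (h k) <-> S2 (h k)) -> (TF h S1 <-> TF h S2).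
Proof. intro E. unfold TF. split; intros [N H]; exists N; intros k Hk; apply E; auto. Qed.

Lemma TF_const h (P0 : Prop) : TF h (fun _ => P0) <-> P0.
Proof. unfold TF. split. - intros [N H]. apply (H N). lia. - intro. exists 0. auto. Qed.

Lemma TF_absL h1 h2 : (forall k, exists N, forall k', N <= k' -> op (h1 k) (h2 k') = h1 k) ->
  M op (TF h1) (TF h2) = TF h1.
Proof.
  intro Hh. apply fam_ext. intro C. unfold M. apply TF_ext. intro k.
  destruct (Hh k) as [N HN]. unfold TF. split.
  - intros [N' H']. rewrite -(HN (N + N')); [|lia]. apply H'. lia.
  - intro Ck. exists N. intros k' Hk'. rewrite HN; auto.
Qed.

Lemma TF_absR h1 h2 : (forall k, exists N, forall k', N <= k' -> op (h1 k) (h2 k') = h2 k') ->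
  M op (TF h1) (TF h2) = TF h2.
Proof.
  intro Hh. apply fam_ext. intro C. unfold M.
  transitivity (TF h1 (fun _ => TF h2 C)); [|apply TF_const].
  apply TF_ext. intro k. destruct (Hh k) as [N HN]. unfold TF. split.
  - intros [N' H']. exists (N + N'). intros k' Hk'. rewrite -HN; [|lia]. apply H'. lia.
  - intros [N' H']. exists (N + N'). intros k' Hk'. rewrite HN; [|lia]. apply H'. lia.
Qed.

Hypothesis IC : ICM X op.

Lemma no_mono (g : nat -> X) : (forall i j, g i = g j -> i = j) ->
  (forall i j, i < j -> op (g i) (g j) = g i) \/ (forall i j, i < j -> op (g i) (g j) = g j) ->
  (forall x, op x x = x) -> False.
Proof.
  intros Inj Mono Id.
  set (hP := fun k => g (2 * k)). set (hQ := fun k => g (2 * k + 1)).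
  assert (EPQ : TF hP = TF hQ).
  { destruct Mono as [Inc|Dec].
    - assert (PP : M op (TF hP) (TF hP) = TF hP).
      { apply TF_absL. intro k. exists k. intros k' Hk'. unfold hP.
        destruct (leqP k' k) as [H|H].
        - assert (k' = k) by lia. subst. apply Id.
        - apply Inc. lia. }
      assert (QQ : M op (TF hQ) (TF hQ) = TF hQ).
      { apply TF_absL. intro k. exists k. intros k' Hk'. unfold hQ.
        destruct (leqP k' k) as [H|H].
        - assert (k' = k) by lia. subst. apply Id.
        - apply Inc. lia. }
      assert (PQ : M op (TF hP) (TF hQ) = TF hP).
      { apply TF_absL. intro k. exists k. intros k' Hk'. unfold hP, hQ. apply Inc. lia. }
      assert (QP : M op (TF hQ) (TF hP) = TF hQ).
      { apply TF_absL. intro k. exists (S k). intros k' Hk'. unfold hP, hQ. apply Inc. lia. }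
      assert (E := IC _ _ (N2_TF hP) (N2_TF hQ) PP QQ). rewrite PQ QP in E. exact E.
    - assert (PP : M op (TF hP) (TF hP) = TF hP).
      { apply TF_absR. intro k. exists k. intros k' Hk'. unfold hP.
        destruct (leqP k' k) as [H|H].
        - assert (k' = k) by lia. subst. apply Id.
        - apply Dec. lia. }
      assert (QQ : M op (TF hQ) (TF hQ) = TF hQ).
      { apply TF_absR. intro k. exists k. intros k' Hk'. unfold hQ.
        destruct (leqP k' k) as [H|H].
        - assert (k' = k) by lia. subst. apply Id.
        - apply Dec. lia. }
      assert (PQ : M op (TF hP) (TF hQ) = TF hQ).
      { apply TF_absR. intro k. exists k. intros k' Hk'. unfold hP, hQ. apply Dec. lia. }
      assert (QP : M op (TF hQ) (TF hP) = TF hP).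
      { apply TF_absR. intro k. exists (S k). intros k' Hk'. unfold hP, hQ. apply Dec. lia. }
      assert (E := IC _ _ (N2_TF hP) (N2_TF hQ) PP QQ). rewrite PQ QP in E. symmetry. exact E. }
  assert (H := equal_f EPQ (fun y => exists k, y = g (2 * k))).
  assert (HP : TF hP (fun y => exists k, y = g (2 * k))).
  { exists 0. intros k _. exists k. reflexivity. }
  rewrite H in HP. destruct HP as [N HN]. destruct (HN N (leqnn N)) as [k Hk].
  unfold hQ in Hk. apply Inj in Hk. lia.
Qed.

End Tails.

Lemma build_seq {X : Type} (Sp : X -> Prop) (R : X -> X -> Prop) a0 :
  Sp a0 -> (forall m, Sp m -> exists a, Sp a /\ R m a) ->
  exists g : nat -> X, forall n, Sp (g n) /\ R (g n) (g n.+1).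
Proof.
  intros Sa0 H.
  set (nxt := fun m => match excluded_middle_informative (exists a, Sp a /\ R m a) with
                       | left E => proj1_sig (constructive_indefinite_description _ E)
                       | right _ => m end).
  assert (Hn : forall m, Sp m -> Sp (nxt m) /\ R m (nxt m)).
  { intros m Sm. unfold nxt. destruct (excluded_middle_informative _) as [E|E].
    - destruct (constructive_indefinite_description _ E) as [a Ha]. exact Ha.
    - exfalso. apply E. auto. }
  set (g := fix g n := match n with 0 => a0 | S n' => nxt (g n') end).
  assert (Sg : forall n, Sp (g n)).
  { induction n as [|n IH]; [exact Sa0|]. apply (Hn _ IH). }
  exists g. intro n. split; auto. apply (Hn _ (Sg n)).
Qed.

Section Sel.
Variables (X : Type) (op : X -> X -> X).
Hypothesis op_assoc : forall a b c, op (op a b) c = op a (op b c).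
Hypothesis Cm : forall x y, op x y = op y x.
Hypothesis Sel : forall x y, op x y = x \/ op x y = y.

Lemma sel_id x : op x x = x.
Proof. destruct (Sel x x); auto. Qed.

Lemma le_trans a b c : op a b = a -> op b c = b -> op a c = a.
Proof. intros H1 H2. rewrite -H1 op_assoc H2. reflexivity. Qed.

Lemma le_antisym a b : op a b = a -> op b a = b -> a = b.
Proof. intros H1 H2. rewrite -H1 Cm H2. reflexivity. Qed.

Lemma le_total a b : op a b = a \/ op b a = b.
Proof. destruct (Sel a b) as [H|H]; auto. right. rewrite Cm. exact H. Qed.

Lemma chain_inc (g : nat -> X) : (forall n, op (g n) (g (S n)) = g n /\ g n <> g (S n)) ->
  (forall i j, i < j -> op (g i) (g j) = g i) /\ (forall i j, g i = g j -> i = j).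
Proof.
  intro Hg.
  assert (Le : forall i d, op (g i) (g (i + d)) = g i).
  { intros i d. induction d as [|d IH].
    - rewrite addn0. apply sel_id.
    - rewrite addnS. apply (le_trans _ _ _ IH). apply Hg. }
  assert (Lt : forall i j, i < j -> op (g i) (g j) = g i).
  { intros i j Hij. replace j with (i + (j - i)) by lia. apply Le. }
  split; auto.
  intros i j E. destruct (ltngtP i j) as [H|H|H]; auto.
  - exfalso. destruct (Hg i) as [H1 H2]. apply H2. apply le_antisym; auto.
    assert (L2 : op (g i.+1) (g j) = g i.+1) by (replace j with (i.+1 + (j - i.+1)) by lia; apply Le).
    rewrite -E in L2. exact L2.
  - exfalso. destruct (Hg j) as [H1 H2]. apply H2. apply le_antisym; auto.
    assert (L2 : op (g j.+1) (g i) = g j.+1) by (replace i with (j.+1 + (i - j.+1)) by lia; apply Le).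
    rewrite E in L2. exact L2.
Qed.

Hypothesis IC : ICM X op.

Lemma has_max (Sp : X -> Prop) a0 : Sp a0 -> exists m, Sp m /\ forall a, Sp a -> op a m = a.
Proof.
  intro Sa0. apply NNPP. intro NH.
  assert (H : forall m, Sp m -> exists a, Sp a /\ (op m a = m /\ m <> a)).
  { intros m Sm. apply NNPP. intro N2'. apply NH. exists m. split; auto.
    intros a Sa. destruct (le_total a m) as [L|L]; auto.
    apply NNPP. intro nL. apply N2'. exists a. split; auto. split; auto.
    intro E. apply nL. rewrite E. apply sel_id. }
  destruct (build_seq Sp _ a0 Sa0 H) as [g Hg].
  destruct (chain_inc g) as [Inc Inj]; [intro n; apply Hg|].
  apply (no_mono X op IC g Inj (or_introl Inc) sel_id).
Qed.

Lemma has_min (Sp : X -> Prop) a0 : Sp a0 -> exists m, Sp m /\ forall a, Sp a -> op m a = m.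
Proof.
  intro Sa0. apply NNPP. intro NH.
  assert (H : forall m, Sp m -> exists a, Sp a /\ (op a m = a /\ a <> m)).
  { intros m Sm. apply NNPP. intro N2'. apply NH. exists m. split; auto.
    intros a Sa. destruct (le_total m a) as [L|L]; auto.
    apply NNPP. intro nL. apply N2'. exists a. split; auto. split; auto.
    intro E. apply nL. rewrite E. apply sel_id. }
  destruct (build_seq Sp (fun m a => op a m = a /\ a <> m) a0 Sa0 H) as [g Hg].
  assert (Hg' : forall n, op (g n.+1) (g n) = g n.+1 /\ g n.+1 <> g n) by (intro n; apply Hg).
  assert (Le : forall i d, op (g (i + d)) (g i) = g (i + d)).
  { intros i d. induction d as [|d IH].
    - rewrite addn0. apply sel_id.
    - rewrite addnS. apply (le_trans _ (g (i + d))); [apply Hg'|exact IH]. }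
  assert (Dec : forall i j, i < j -> op (g i) (g j) = g j).
  { intros i j Hij. rewrite Cm. replace j with (i + (j - i)) by lia. apply Le. }
  assert (Inj : forall i j, g i = g j -> i = j).
  { intros i j E. destruct (ltngtP i j) as [H1|H1|H1]; auto.
    - exfalso. destruct (Hg' i) as [H2 H3]. apply H3. apply le_antisym; auto.
      assert (L2 : op (g j) (g i.+1) = g j) by (replace j with (i.+1 + (j - i.+1)) by lia; apply Le).
      rewrite -E in L2. exact L2.
    - exfalso. destruct (Hg' j) as [H2 H3]. apply H3. apply le_antisym; auto.
      assert (L2 : op (g i) (g j.+1) = g i) by (replace i with (j.+1 + (i - j.+1)) by lia; apply Le).
      rewrite E in L2. exact L2. }
  apply (no_mono X op IC g Inj (or_intror Dec) sel_id).
Qed.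

End Sel.

Fixpoint cnt {X : Type} (p : X -> Prop) (l : list X) : nat :=
  match l with
  | nil => 0
  | cons a l' => if excluded_middle_informative (p a) then S (cnt p l') else cnt p l'
  end.

Lemma cnt_le {X : Type} (p q : X -> Prop) l : (forall a, p a -> q a) -> cnt p l <= cnt q l.
Proof.
  intro H. induction l as [|a l IH]; simpl; [done|].
  destruct (excluded_middle_informative (p a)); destruct (excluded_middle_informative (q a)); simpl; try lia.
  exfalso; auto.
Qed.

Lemma cnt_lt {X : Type} (p q : X -> Prop) l : (forall a, p a -> q a) ->
  (exists a, List.In a l /\ q a /\ ~ p a) -> cnt p l < cnt q l.
Proof.
  intros H [a0 [Ia [qa pa]]]. induction l as [|a l IH]; simpl; [destruct Ia|].
  destruct Ia as [E|Ia].
  - subst. destruct (excluded_middle_informative (p a0)); [contradiction|].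
    destruct (excluded_middle_informative (q a0)); [|contradiction]. simpl.
    have := cnt_le p q l H. lia.
  - have := IH Ia.
    destruct (excluded_middle_informative (p a)); destruct (excluded_middle_informative (q a)); simpl; try lia.
    exfalso; auto.
Qed.

Lemma cnt_True {X : Type} (l : list X) : cnt (fun _ => True) l = length l.
Proof.
  induction l as [|a l IH]; simpl; auto.
  destruct (excluded_middle_informative True) as [t|n]; simpl; [rewrite IH; reflexivity|exfalso; auto].
Qed.

Section FinIso.
Variables (X : Type) (op : X -> X -> X).
Hypothesis op_assoc : forall a b c, op (op a b) c = op a (op b c).
Hypothesis Cm : forall x y, op x y = op y x.
Hypothesis Sel : forall x y, op x y = x \/ op x y = y.
Hypothesis Mx : forall (Sp : X -> Prop) a0, Sp a0 -> exists m, Sp m /\ forall a, Sp a -> op a m = a.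
Hypothesis Mn : forall (Sp : X -> Prop) a0, Sp a0 -> exists m, Sp m /\ forall a, Sp a -> op m a = m.

Definition Fin (A : X -> Prop) := exists l : list X, forall x, A x -> List.In x l.

Lemma fin_all : exists l : list X, forall x, List.In x l.
Proof.
  assert (Fd : forall x, Fin (fun y => op y x = y)).
  { apply NNPP. intro NH. apply not_all_ex_not in NH. destruct NH as [x0 Hx0].
    destruct (Mn (fun x => ~ Fin (fun y => op y x = y)) x0 Hx0) as [m [Sm Hm]].
    apply Sm.
    destruct (classic (exists y, op y m = y /\ y <> m)) as [[y0 Hy0]|NB].
    - destruct (Mx (fun y => op y m = y /\ y <> m) y0 Hy0) as [p [[Hpm Hpn] Hp]].
      assert (Fp : Fin (fun y => op y p = y)).
      { apply NNPP. intro nF. apply Hpn. apply (le_antisym X op Cm); [exact Hpm|]. apply Hm. exact nF. }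
      destruct Fp as [lp Hlp]. exists (cons m lp). intros y Hy.
      destruct (classic (y = m)) as [E|E]; [left; auto|right].
      apply Hlp. apply Hp. auto.
    - exists (cons m nil). intros y Hy. left.
      apply NNPP. intro E. apply NB. exists y. split; auto. }
  destruct (classic (exists x : X, True)) as [[x0 _]|NE].
  - destruct (Mx (fun _ => True) x0 I) as [Mm [_ HM]].
    destruct (Fd Mm) as [l Hl]. exists l. intro x. apply Hl. apply HM. exact I.
  - exists nil. intro x. exfalso. apply NE. exists x. exact I.
Qed.

Definition decX : forall x y : X, {x = y} + {x <> y} := fun x y => excluded_middle_informative (x = y).

Lemma fin_iso : exists n, sg_iso op (Ln n) minn.
Proof.
  destruct fin_all as [l0 Hl0].
  set (l := List.nodup decX l0).
  assert (Hl : forall x, List.In x l) by (intro x; unfold l; apply List.nodup_In; auto).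
  assert (ND : List.NoDup l) by (unfold l; apply List.NoDup_nodup).
  set (lt := fun y x => op y x = y /\ y <> x).
  set (f := fun x => cnt (fun y => lt y x) l).
  set (n := length l).
  assert (Mono : forall x y, lt x y -> f x < f y).
  { intros x y [Hxy nxy]. unfold f. apply cnt_lt.
    - intros a [H1 H2]. split.
      + apply (le_trans X op op_assoc _ x); auto.
      + intro E. subst a. apply H2. apply (le_antisym X op Cm); auto.
    - exists x. split; auto. split; [split; auto|]. intros [_ H]. apply H. reflexivity. }
  assert (Tri : forall x y, x = y \/ lt x y \/ lt y x).
  { intros x y. destruct (classic (x = y)) as [E|E]; auto.
    destruct (le_total X op Cm Sel x y) as [H|H]; right; [left|right]; split; auto. }
  assert (Inj : forall x y, f x = f y -> x = y).
  { intros x y E. destruct (Tri x y) as [H|[H|H]]; auto; apply Mono in H; lia. }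
  assert (Bnd : forall x, f x < n).
  { intro x. unfold f, n. rewrite -(cnt_True l). apply cnt_lt; auto.
    exists x. split; auto. split; auto. intros [_ H]. apply H. reflexivity. }
  exists n. exists f. split; [|split; [|split]].
  - intro x. unfold Ln. apply Bnd.
  - exact Inj.
  - intros k Hk. unfold Ln in Hk.
    assert (NDm : List.NoDup (List.map f l)).
    { apply List.NoDup_map_NoDup_ForallPairs; auto. intros a b _ _. apply Inj. }
    assert (Inc : List.incl (List.seq 0 n) (List.map f l)).
    { apply List.NoDup_length_incl; auto.
      - rewrite List.length_map List.length_seq. unfold n. lia.
      - intros m Hm. apply List.in_map_iff in Hm. destruct Hm as [x [<- _]].
        apply List.in_seq. have := Bnd x. lia. }
    assert (Ik : List.In k (List.seq 0 n)) by (apply List.in_seq; lia).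
    apply Inc in Ik. apply List.in_map_iff in Ik. destruct Ik as [x [Ex _]]. eauto.
  - intros x y. destruct (Tri x y) as [E|[H|H]].
    + subst. rewrite (sel_id X op Sel). lia.
    + rewrite (proj1 H). have := Mono _ _ H. lia.
    + rewrite Cm (proj1 H). have := Mono _ _ H. lia.
Qed.

End FinIso.

Module AlgCL.
Import GRing.Theory Num.Theory.
Local Open Scope ring_scope.
Lemma one_neq_m1 : (1 : algC) <> -1.
Proof. intro E. have H : (2%:R : algC) = 0%R by rewrite mulr2n {2}E subrr.
  move/eqP: H. by rewrite pnatr_eq0. Qed.
Lemma sq1 (u : algC) : (u ^+ 2 = 1 -> u = 1 \/ u = -1)%R.
Proof. move/eqP. rewrite sqrf_eq1. case/orP => /eqP ->; auto. Qed.
Lemma mulrNN' : (-1 : algC) * -1 = 1. Proof. by rewrite mulrNN mulr1. Qed.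
Lemma mulr1' : (-1 : algC) * 1 = -1. Proof. by rewrite mulr1. Qed.
Lemma mul1r' : (1 : algC) * -1 = -1. Proof. by rewrite mul1r. Qed.
Lemma m1sq : ((-1 : algC) ^+ 2 = 1)%R. Proof. by rewrite sqrrN expr1n. Qed.
End AlgCL.
Import AlgCL.

Section Assemble.
Variables (X : Type) (op : X -> X -> X).
Hypothesis op_assoc : forall a b c, op (op a b) c = op a (op b c).
Hypothesis IC : ICM X op.
Hypothesis SR : SCM X op \/ RGM X op.

Lemma grp_case x : op x x <> x -> forall z, z = x \/ z = op x x.
Proof.
  intros nx z.
  assert (Cu := cube_all X op op_assoc IC SR).
  assert (Cm := commX X op op_assoc IC Cu).
  set (e := op x x).
  assert (xe : op x e = x) by (unfold e; rewrite -op_assoc; apply Cu).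
  assert (He : op e e = e) by (unfold e at 1; rewrite op_assoc xe; reflexivity).
  assert (nxe : x <> e) by (intro E; apply nx; auto).
  set (f := op z z).
  assert (zf : op z f = z) by (unfold f; rewrite -op_assoc; apply Cu).
  assert (Hf : op f f = f) by (unfold f at 1; rewrite op_assoc zf; reflexivity).
  destruct (classic (f = e)) as [Efe|Nfe].
  - destruct (classic (z = x)) as [E|Nzx]; [left; auto|].
    destruct (classic (z = e)) as [E|Nze]; [right; auto|].
    exfalso. apply (group3 X op op_assoc IC Cu Cm e x z); auto.
  - exfalso. assert (Nef : e <> f) by (intro E; apply Nfe; auto).
    destruct (chain X op op_assoc Cm SR e f He Hf) as [Eef|Eef].
    + destruct (classic (z = f)) as [Ezf|Nzf].
      * apply (c21conf X op op_assoc Cu Cm SR e x f); auto.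
      * apply (dconf X op op_assoc IC Cu Cm f z e); auto.
    + apply (dconf X op op_assoc IC Cu Cm e x f); auto.
      rewrite Cm. exact Eef.
Qed.

Lemma three_four : sg_iso op (Cn 2) Cmul \/ exists n, sg_iso op (Ln n) minn.
Proof.
  assert (Cu := cube_all X op op_assoc IC SR).
  assert (Cm := commX X op op_assoc IC Cu).
  destruct (classic (exists x, op x x <> x)) as [[x nx]|Nid].
  - left. assert (G := grp_case x nx).
    set (e := op x x).
    assert (xe : op x e = x) by (unfold e; rewrite -op_assoc; apply Cu).
    assert (He : op e e = e) by (unfold e at 1; rewrite op_assoc xe; reflexivity).
    assert (ex : op e x = x) by (rewrite Cm; exact xe).
    assert (nxe : x <> e) by (intro E; apply nx; auto).
    assert (G' : forall z, z = x \/ z = e) by (intro z; apply G).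
    assert (xx : op x x = e) by reflexivity.
    clearbody e. clear G.
    set (f := fun z => if excluded_middle_informative (z = e) then (1%R : algC) else (-1)%R).
    assert (fe : f e = 1%R) by (unfold f; destruct (excluded_middle_informative (e = e)); [auto|contradiction]).
    assert (fx : f x = (-1)%R) by (unfold f; destruct (excluded_middle_informative (x = e)); [contradiction|auto]).
    clearbody f.
    exists f. split; [|split; [|split]].
    + intro z. unfold Cn. destruct (G' z) as [-> | ->]; [rewrite fx; apply m1sq|rewrite fe; apply GRing.expr1n].
    + intros a b Eab. destruct (G' a) as [-> | ->]; destruct (G' b) as [-> | ->]; auto;
        rewrite ?fx ?fe in Eab; exfalso; apply one_neq_m1; auto.
    + intros u Hu. unfold Cn in Hu. destruct (sq1 u Hu) as [-> | ->]; eauto.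
    + intros a b. unfold Cmul. destruct (G' a) as [-> | ->]; destruct (G' b) as [-> | ->];
        rewrite ?xx ?xe ?ex ?He ?fx ?fe; first [symmetry; apply GRing.mulr1 | symmetry; apply mulrNN' | symmetry; apply mulr1' | symmetry; apply mul1r'].
  - right. assert (Id : forall x, op x x = x) by (intro x; apply NNPP; intro N; apply Nid; eauto).
    assert (Sel : forall x y, op x y = x \/ op x y = y).
    { intros a b. apply (chain X op op_assoc Cm SR); auto. }
    apply (fin_iso X op op_assoc Cm Sel).
    + intros Sp a0 Ha0. apply (has_max X op op_assoc Cm Sel IC Sp a0 Ha0).
    + intros Sp a0 Ha0. apply (has_min X op op_assoc Cm Sel IC Sp a0 Ha0).
Qed.

End Assemble.

Section SelN2.
Variables (X : Type) (op : X -> X -> X).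
Hypothesis op_assoc : forall a b c, op (op a b) c = op a (op b c).
Hypothesis Cm : forall x y, op x y = op y x.
Hypothesis Sel : forall x y, op x y = x \/ op x y = y.
Hypothesis Mx : forall (Sp : X -> Prop) a0, Sp a0 -> exists m, Sp m /\ forall a, Sp a -> op a m = a.
Hypothesis Mn : forall (Sp : X -> Prop) a0, Sp a0 -> exists m, Sp m /\ forall a, Sp a -> op m a = m.

Lemma sel_idem A : N2 A -> M op A A = A.
Proof.
  intros [[ne up] _]. apply fam_ext. intro C. unfold M. split.
  - intro H. destruct (classic (forall a, A (fun b => C (op a b)) -> C a)) as [Sub|NS].
    + apply (up _ _ H). exact Sub.
    + apply not_all_ex_not in NS. destruct NS as [a Ha].
      apply imply_to_and in Ha. destruct Ha as [Ha nCa].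
      apply (up _ _ Ha). intros b Hb. destruct (Sel a b) as [E|E]; rewrite E in Hb; [contradiction|exact Hb].
  - intro H. apply (up _ _ H). intros a Ca. apply (up _ _ H). intros b Cb.
    destruct (Sel a b) as [E|E]; rewrite E; auto.
Qed.

Lemma Msym A B C : N2 A -> N2 B ->
  (M op A B C <-> exists U V, A U /\ B V /\ forall u v, U u -> V v -> C (op u v)).
Proof.
  intros [[neA upA] _] [[neB upB] _]. unfold M. split.
  - intro H. set (S := fun a => B (fun b => C (op a b))).
    destruct (classic (forall a, S a -> C a)) as [Sub|NS].
    + destruct (neA _ H) as [a0 Ha0].
      destruct (Mx S a0 Ha0) as [m [Sm Hm]].
      exists S, (fun b => C (op m b)). split; auto. split; auto.
      intros a b Sa Vb. destruct (Sel a b) as [E|E]; rewrite E; [apply Sub; auto|].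
      destruct (Sel m b) as [E'|E']; [|rewrite E' in Vb; exact Vb].
      assert (Eab : op a b = a) by (apply (le_trans X op op_assoc _ m); auto).
      rewrite -E Eab. apply Sub; auto.
    + apply not_all_ex_not in NS. destruct NS as [a0 Ha0].
      apply imply_to_and in Ha0. destruct Ha0 as [Sa0 nC0].
      destruct (Mn (fun a => S a /\ ~ C a) a0 (conj Sa0 nC0)) as [m [[Sm nCm] Hm]].
      exists S, (fun b => C (op m b)). split; auto. split; auto.
      intros a b Sa Vb.
      assert (Emb : op m b = b) by (destruct (Sel m b) as [E|E]; auto; rewrite E in Vb; contradiction).
      rewrite Emb in Vb.
      destruct (classic (C a)) as [Ca|nCa].
      * destruct (Sel a b) as [E|E]; rewrite E; auto.
      * assert (Hma : op m a = m) by auto.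
        assert (Eba : op b a = b).
        { apply (le_trans X op op_assoc _ m); auto. rewrite Cm. exact Emb. }
        rewrite Cm Eba. exact Vb.
  - intros [U [V [HU [HV HC]]]]. apply (upA _ _ HU). intros u Uu. apply (upB _ _ HV). auto.
Qed.

Lemma sel_comm A B : N2 A -> N2 B -> M op A B = M op B A.
Proof.
  intros NA NB. apply fam_ext. intro C. rewrite (Msym A B C NA NB) (Msym B A C NB NA).
  split; intros [U [V [HU [HV HC]]]]; exists V, U; split; auto; split; auto;
    intros u v Hu Hv; rewrite Cm; auto.
Qed.

End SelN2.

Section LnCase.
Variables (X : Type) (op : X -> X -> X).
Hypothesis op_assoc : forall a b c, op (op a b) c = op a (op b c).

Lemma Ln_props n : sg_iso op (Ln n) minn ->
  (forall x y, op x y = op y x) /\ (forall x y, op x y = x \/ op x y = y) /\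
  (forall (Sp : X -> Prop) a0, Sp a0 -> exists m, Sp m /\ forall a, Sp a -> op a m = a) /\
  (forall (Sp : X -> Prop) a0, Sp a0 -> exists m, Sp m /\ forall a, Sp a -> op m a = m).
Proof.
  intros [f [Pf [Inj [Sur Hom]]]].
  assert (Cm : forall x y, op x y = op y x).
  { intros x y. apply Inj. rewrite !Hom. lia. }
  assert (Le : forall x y, f x <= f y -> op x y = x).
  { intros x y H. apply Inj. rewrite Hom. lia. }
  split; auto. split.
  { intros x y. destruct (leqP (f x) (f y)) as [H|H]; [left; auto|right].
    rewrite Cm. apply Le. lia. }
  split.
  - intros Sp a0 Sa0. apply NNPP. intro NH.
    assert (Up : forall a, Sp a -> exists b, Sp b /\ f a < f b).
    { intros a Sa. apply NNPP. intro NB. apply NH. exists a. split; auto.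
      intros b Sb. apply Le. apply NNPP. intro Nl. apply NB. exists b. split; auto. lia. }
    assert (Big : forall k, exists a, Sp a /\ k <= f a).
    { induction k as [|k [a [Sa Hk]]]; [exists a0; split; auto|].
      destruct (Up a Sa) as [b [Sb Hb]]. exists b. split; auto. lia. }
    destruct (Big n) as [a [_ Ha]]. have := Pf a. unfold Ln. lia.
  - intros Sp a0 Sa0. apply NNPP. intro NH.
    assert (Dn : forall a, Sp a -> exists b, Sp b /\ f b < f a).
    { intros a Sa. apply NNPP. intro NB. apply NH. exists a. split; auto.
      intros b Sb. apply Le. apply NNPP. intro Nl. apply NB. exists b. split; auto. lia. }
    assert (Small : forall k a, Sp a -> k <= f a).
    { induction k as [|k IH]; [intros; lia|].
      intros a Sa. destruct (Dn a Sa) as [b [Sb Hb]]. have := IH b Sb. lia. }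
    have := Small (f a0).+1 a0 Sa0. lia.
Qed.

End LnCase.

Section C2Case.
Variables (X : Type) (op : X -> X -> X) (e x : X).
Hypothesis ee : op e e = e.
Hypothesis ex : op e x = x.
Hypothesis xe : op x e = x.
Hypothesis xx : op x x = e.
Hypothesis nex : e <> x.
Hypothesis all2 : forall z, z = e \/ z = x.

Definition K (a1 a2 a3 : Prop) : (X -> Prop) -> Prop :=
  fun C => (C e /\ a1) \/ (C x /\ a2) \/ (C e /\ C x /\ a3).

Lemma fam2 A : N2 A -> A = K (A (fun y => y = e)) (A (fun y => y = x)) (A (fun _ => True)).
Proof.
  intros [[ne up] lk]. apply fam_ext. intro C. unfold K. split.
  - intro H. destruct (classic (C e)) as [Ce|nCe]; destruct (classic (C x)) as [Cx|nCx].
    + right; right. split; auto. split; auto. apply (up _ _ H). auto.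
    + left. split; auto. apply (up _ _ H). intros y Cy. destruct (all2 y) as [->| ->]; auto. contradiction.
    + right; left. split; auto. apply (up _ _ H). intros y Cy. destruct (all2 y) as [->| ->]; auto. contradiction.
    + destruct (ne _ H) as [y Cy]. destruct (all2 y) as [->| ->]; contradiction.
  - intros [[Ce H]|[[Cx H]|[Ce [Cx H]]]]; apply (up _ _ H).
    + intros y ->. auto.
    + intros y ->. auto.
    + intros y _. destruct (all2 y) as [->| ->]; auto.
Qed.

Lemma fam2_c A : N2 A -> (A (fun y => y = e) -> A (fun _ => True)) /\
  (A (fun y => y = x) -> A (fun _ => True)) /\ ~ (A (fun y => y = e) /\ A (fun y => y = x)).
Proof.
  intros [[ne up] lk]. split; [|split].
  - intro H. apply (up _ _ H). auto.
  - intro H. apply (up _ _ H). auto.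
  - intros [H1 H2]. destruct (lk _ _ H1 H2) as [y [-> E]]. auto.
Qed.

Lemma C2_comm A B : N2 A -> N2 B -> M op A B = M op B A.
Proof.
  intros NA NB. destruct (fam2_c A NA) as [a1 [a2 a3]]. destruct (fam2_c B NB) as [b1 [b2 b3]].
  rewrite (fam2 A NA) (fam2 B NB).
  generalize dependent (A (fun y => y = e)). generalize dependent (A (fun y => y = x)).
  generalize dependent (A (fun _ => True)).
  generalize dependent (B (fun y => y = e)). generalize dependent (B (fun y => y = x)).
  generalize dependent (B (fun _ => True)).
  intros. apply fam_ext. intro C. unfold M, K. cbv beta. rewrite ee ex xe xx. tauto.
Qed.

Lemma C2_cube A : N2 A -> M op (M op A A) A = A.
Proof.
  intros NA. destruct (fam2_c A NA) as [a1 [a2 a3]].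
  rewrite (fam2 A NA).
  generalize dependent (A (fun y => y = e)). generalize dependent (A (fun y => y = x)).
  generalize dependent (A (fun _ => True)).
  intros. apply fam_ext. intro C. unfold M, K. cbv beta. rewrite ?ee ?ex ?xe ?xx. rewrite ?ee ?ex ?xe ?xx. tauto.
Qed.

End C2Case.

Lemma C2_props (X : Type) (op : X -> X -> X) : sg_iso op (Cn 2) Cmul ->
  exists e x, op e e = e /\ op e x = x /\ op x e = x /\ op x x = e /\ e <> x /\ forall z, z = e \/ z = x.
Proof.
  intros [f [Pf [Inj [Sur Hom]]]].
  destruct (Sur 1%R (GRing.expr1n _ _)) as [e fe].
  destruct (Sur (-1)%R m1sq) as [x fx].
  assert (nex : e <> x) by (intro E; apply one_neq_m1; transitivity (f e); [symmetry; exact fe|]; rewrite E; exact fx).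
  exists e, x. unfold Cmul in Hom.
  split; [|split; [|split; [|split; [|split]]]]; auto.
  - apply Inj. rewrite Hom fe. apply GRing.mulr1.
  - apply Inj. rewrite Hom fe fx. apply GRing.mul1r.
  - apply Inj. rewrite Hom fe fx. apply GRing.mulr1.
  - apply Inj. rewrite Hom fe fx. apply mulrNN'.
  - intro z. destruct (sq1 (f z) (Pf z)) as [E|E]; [left|right]; apply Inj; rewrite E; auto.
Qed.

Theorem theorem1p3 (X : Type) (op : X -> X -> X)
  (op_assoc : forall a b c, op (op a b) c = op a (op b c)) :
  let P := @N2 X in
  let mul := up_mul op in
  ((sg_commutative P mul /\ sg_clifford P mul) <-> sg_inverse P mul) /\
  (sg_inverse P mul <->
     (idempotents_commute P mul /\ (sg_subclifford P mul \/ sg_regular P mul))) /\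
  ((idempotents_commute P mul /\ (sg_subclifford P mul \/ sg_regular P mul)) <->
     (sg_iso op (Cn 2) Cmul \/ exists n : nat, sg_iso op (Ln n) minn)).
Proof.
  intros P mul.
  assert (ag : forall a b, P a -> P b -> mul a b = M op a b) by (intros; apply um; auto).
  assert (ag' : forall a b, P a -> P b -> M op a b = mul a b) by (intros; symmetry; apply um; auto).
  assert (c1 : forall a b, P a -> P b -> P (mul a b)) by (intros; apply N2_um; auto).
  assert (c2 : forall a b, P a -> P b -> P (M op a b)) by (intros; apply N2_M; auto).
  assert (MA := M_assoc op op_assoc).
  assert (i12 : sg_commutative P mul /\ sg_clifford P mul -> sg_inverse P mul).
  { intros [Hc Hl]. apply (tr_inv _ P (M op) mul ag' c2 c1).
    apply comm_clifford_inverse; auto.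
    - apply (tr_comm _ P mul (M op) ag); auto.
    - apply (tr_clif _ P mul (M op) ag); auto. }
  assert (i23 : sg_inverse P mul ->
     idempotents_commute P mul /\ (sg_subclifford P mul \/ sg_regular P mul)).
  { intro Hi. assert (HiM : sg_inverse P (M op)) by (apply (tr_inv _ P mul (M op) ag c1 c2); auto).
    split.
    - apply (tr_ic _ P (M op) mul ag'). apply inverse_idem_commute; auto.
    - right. apply (tr_reg _ P (M op) mul ag' c2).
      intros x Px. destruct (HiM x Px) as [y [Py [[H1 H2] _]]]. exists y. split; auto. }
  assert (i34 : idempotents_commute P mul /\ (sg_subclifford P mul \/ sg_regular P mul) ->
     sg_iso op (Cn 2) Cmul \/ exists n : nat, sg_iso op (Ln n) minn).
  { intros [Hic Hsr].
    assert (IC : ICM X op) by exact (tr_ic _ P mul (M op) ag Hic).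
    assert (SR : SCM X op \/ RGM X op).
    { destruct Hsr as [H|H]; [left|right].
      - exact (tr_subclif _ P mul (M op) ag H).
      - exact (tr_reg _ P mul (M op) ag c1 H). }
    apply (three_four X op op_assoc IC SR). }
  assert (i41 : sg_iso op (Cn 2) Cmul \/ (exists n : nat, sg_iso op (Ln n) minn) ->
     sg_commutative P mul /\ sg_clifford P mul).
  { intro H4.
    assert (CC : (forall A B, P A -> P B -> M op A B = M op B A) /\
                 (forall A, P A -> M op (M op A A) A = A)).
    { destruct H4 as [H2|[n Hn]].
      - destruct (C2_props X op H2) as [e [x [ee [ex [xe [xx [nex all2]]]]]]].
        split.
        + intros A B NA NB. apply (C2_comm X op e x ee ex xe xx nex all2); auto.
        + intros A NA. apply (C2_cube X op e x ee ex xe xx nex all2); auto.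
      - destruct (Ln_props X op n Hn) as [Cm [Sel [Mx Mn]]].
        split.
        + intros A B NA NB. apply (sel_comm X op op_assoc Cm Sel Mx Mn); auto.
        + intros A NA. rewrite !(sel_idem X op Sel A NA). reflexivity. }
    destruct CC as [Co Cu]. split.
    - apply (tr_comm _ P (M op) mul ag'). intros A B NA NB. auto.
    - apply (tr_clif _ P (M op) mul ag'). apply cube_clifford; auto. }
  split; [|split]; split.
  - exact i12.
  - intro H. apply i41, i34, i23, H.
  - exact i23.
  - intro H. apply i12, i41, i34, H.
  - exact i34.
  - intro H. apply i23, i12, i41, H.
Qed.
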